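(* Consider a reaction network as below. If $P_{\kappa,c}$ is infinite for every $(\kappa,c)\in\mathbb{R}^r_{>0}\times\mathbb{R}^d$ with $P_{\kappa,c}\neq\emptyset$, then $P_{\kappa,c}=\emptyset$ for all $(\kappa,c)$ in a nonempty Zariski open subset of $\mathbb{R}^r_{>0}\times\mathbb{R}^d$.
   Context: A reaction network with species $X_1,\dots,X_n$ and reactions $\sum_j b_{ji}X_j\to\sum_j a_{ji}X_j$, $i=1,\dots,r$, with rate constants $\kappa\in\mathbb{R}^r_{>0}$, has stoichiometric matrix $\Gamma\in\mathbb{Z}^{n\times r}$ with entries $a_{ji}-b_{ji}$ and reactant matrix $B$ with entries $b_{ji}$. Let $s=\operatorname{rk}\Gamma$, $d=n-s$, $N\in\mathbb{Z}^{s\times r}$ of rank $s$ with $\operatorname{im}(N^\top)=\operatorname{im}(\Gamma^\top)$, $W\in\mathbb{R}^{d\times n}$ with rows a basis of $\ker(\Gamma^\top)$. With $\circ$ the Hadamard product and $(x^B)_i=\prod_j x_j^{b_{ji}}$, $P_{\kappa,c}=\{x\in\mathbb{R}^n_{>0}: N(\kappa\circ x^B)=0,\ Wx=c\}$. *)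

(* Defs.v *)
From HB Require Import structures.
From mathcomp Require Import all_boot all_order all_algebra.
From mathcomp Require Import reals.
From mathcomp Require Import mpoly.
Set Implicit Arguments. Unset Strict Implicit. Unset Printing Implicit Defensive.
Import Order.TTheory GRing.Theory Num.Theory.
Local Open Scope ring_scope.

(* Reaction network with n species and r reactions:
   reaction i is  sum_j B j i X_j -> sum_j A j i X_j. *)

Definition stoich (R : numDomainType) (n r : nat) (A B : 'M[nat]_(n, r)) : 'M[R]_(n, r) :=
  \matrix_(j, i) ((A j i)%:R - (B j i)%:R).

Definition monvec (R : numDomainType) (n r : nat) (B : 'M[nat]_(n, r))
  (x : 'cV[R]_n) : 'cV[R]_r :=
  \col_i \prod_(j < n) (x j 0) ^+ (B j i).

Definition hadamard (R : numDomainType) (m : nat) (u v : 'cV[R]_m) : 'cV[R]_m :=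
  \col_i (u i 0 * v i 0).

Definition positive_vec (R : numDomainType) (m : nat) (u : 'cV[R]_m) : Prop :=
  forall i, 0 < u i 0.

Definition Pkc (R : numDomainType) (n r s d : nat) (B : 'M[nat]_(n, r))
  (N : 'M[int]_(s, r)) (W : 'M[R]_(d, n)) (kappa : 'cV[R]_r) (c : 'cV[R]_d)
  (x : 'cV[R]_n) : Prop :=
  positive_vec x /\
  (map_mx (fun z : int => z%:~R) N) *m hadamard kappa (monvec B x) = 0 /\
  W *m x = c.

Definition finite_pred (T : eqType) (P : T -> Prop) : Prop :=
  exists s : seq T, forall x, P x -> x \in s.

Definition kc_point (R : pzRingType) (r d : nat) (kappa : 'cV[R]_r) (c : 'cV[R]_d)
  : 'I_(r + d) -> R := fun i => col_mx kappa c i 0.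

(* The relative Zariski open subset of R^r_{>0} x R^d given by the complement
   of the common zero set of the finite family ps of polynomials. *)
Definition zariski_open_at (R : realType) (r d : nat) (ps : seq {mpoly R[r + d]})
  (kappa : 'cV[R]_r) (c : 'cV[R]_d) : Prop :=
  positive_vec kappa /\ has (fun p => p.@[kc_point kappa c] != 0) ps.

(* Main.v *)
Require Import Defs.
From HB Require Import structures.
From mathcomp Require Import all_boot all_order all_algebra.
From mathcomp Require Import reals.
From mathcomp Require Import mpoly.
From mathcomp Require Import zify ring.
Import Order.TTheory GRing.Theory Num.Theory.
Local Open Scope ring_scope.
Set Implicit Arguments. Unset Strict Implicit. Unset Printing Implicit Defensive.

Section Aux.
Variable R : realType.

Lemma poly_roots_fin (p : {poly R}) : p != 0 ->
  exists s : seq R, forall t, root p t -> t \in s.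
Proof.
have [k hk] := ubnP (size p).
elim: k p hk => [//|k IH] p hk pn0.
case: (boolp.pselect (exists t, root p t)) => [[t0 rt0]|nr]; last first.
  by exists [::] => t rt; exfalso; apply: nr; exists t.
have [q pq] := factor_theorem p t0 rt0.
have q0 : q != 0 by apply: contraNneq pn0 => q0; rewrite pq q0 mul0r.
have sz : (size q < k)%N.
  move: hk; rewrite pq size_Mmonic ?monicXsubC // size_XsubC addn2 /=.
  by rewrite ltnS.
have [s Hs] := IH q sz q0.
exists (t0 :: s) => t; rewrite pq rootM root_XsubC inE => /orP[/Hs ->|->].
  by rewrite orbT.
by [].
Qed.

Lemma digits_inj k S (a b : 'I_k -> nat) :
  (forall i, a i < S)%N -> (forall i, b i < S)%N ->
  (\sum_i a i * S ^ i)%N = (\sum_i b i * S ^ i)%N -> a =1 b.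
Proof.
elim: k a b => [|k IH] a b ha hb.
  by move=> _ [].
rewrite !big_ord_recl /= !expn0 !muln1.
have E (c : 'I_k.+1 -> nat) : (\sum_(i < k) c (lift ord0 i) * S ^ (bump 0 i))%N
    = (S * \sum_(i < k) c (lift ord0 i) * S ^ i)%N.
  rewrite big_distrr /=; apply: eq_bigr => i _.
  by rewrite /bump /= add1n expnS mulnCA.
rewrite !E => H.
have Sp : (0 < S)%N by apply: leq_ltn_trans (ha ord0).
have h0 : a ord0 = b ord0.
  have := congr1 (fun z => z %% S)%N H.
  by rewrite ![(_ + S * _)%N]addnC !(mulnC S) !modnMDl !modn_small.
rewrite h0 in H; move/eqP: H; rewrite eqn_add2l eqn_pmul2l // => /eqP H.
have := IH (fun i => a (lift ord0 i)) (fun i => b (lift ord0 i)) (fun i => ha _)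
  (fun i => hb _) H => Hl i.
by case: (unliftP ord0 i) => [j ->|->].
Qed.

Lemma le_sum_norm (s : seq R) x : x \in s -> x <= \sum_(y <- s) `|y|.
Proof.
elim: s => //= y s IH; rewrite inE big_cons => /orP[/eqP->|/IH h].
  by rewrite (le_trans (ler_norm y)) // lerDl sumr_ge0.
by rewrite (le_trans h) // lerDr.
Qed.

Lemma avoid_list (s : seq R) : exists t, 0 < t /\ t \notin s.
Proof.
exists (1 + \sum_(y <- s) `|y|); split.
  by rewrite ltr_wpDr ?sumr_ge0.
apply/negP => /le_sum_norm; rewrite gerDr leNgt ltr01 //.
Qed.

Lemma mnm_le_msize k (p : {mpoly R[k]}) m i : m \in msupp p -> (m i < msize p)%N.
Proof.
move=> /msize_mdeg_lt; apply: leq_ltn_trans.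
by rewrite mdegE (bigD1 i) //= leq_addr.
Qed.

Lemma mpoly_nv k (p : {mpoly R[k]}) : p != 0 ->
  exists v : 'I_k -> R, (forall i, 0 < v i) /\ p.@[v] != 0.
Proof.
move=> pn0.
set S := msize p.
pose phi (m : 'X_{1..k}) := (\sum_i m i * S ^ i)%N.
pose q := \sum_(m <- msupp p) p@_m *: 'X^(phi m) : {poly R}.
have Hev t : p.@[fun i => t ^+ (S ^ i)] = q.[t].
  rewrite mevalE /q horner_sum; apply: eq_bigr => m _.
  rewrite hornerZ hornerXn; congr (_ * _).
  rewrite (eq_bigr (fun i => t ^+ (m i * S ^ i))) ?prodrXr //.
  by move=> i _; rewrite -exprM mulnC.
have [m0 m0in] : exists m0, m0 \in msupp p.
  case E: (msupp p) => [|m0 s]; last by exists m0; rewrite inE eqxx.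
  by move: pn0; rewrite -msupp_eq0 E.
have q0 : q != 0.
  apply/eqP => /(congr1 (fun z : {poly R} => z`_(phi m0))).
  rewrite coef0 /q coef_sum (bigD1_seq m0) ?msupp_uniq //= coefZ coefXn eqxx mulr1.
  rewrite big1_seq ?addr0; first by move=> h; move: m0in; rewrite mcoeff_msupp -h eqxx.
  move=> m /andP[mm0 min]; rewrite coefZ coefXn.
  case: eqP => [E|]; last by rewrite mulr0.
  have H := digits_inj (a := fun i => m0 i) (b := fun i => m i)
     (fun j => mnm_le_msize j m0in) (fun j => mnm_le_msize j min) E.
  exfalso; move/negP: mm0; apply; apply/eqP/mnmP => i.
  by rewrite H.
have [s Hs] := poly_roots_fin q0.
have [t [tp tn]] := avoid_list s.
exists (fun i => t ^+ (S ^ i)); split; first by move=> i; rewrite exprn_gt0.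
rewrite Hev; apply/negP => /eqP qt; move/negP: tn; apply; apply: Hs.
by rewrite /root qt.
Qed.

End Aux.

Section Core.
Variable R : realType.

Lemma msizeM_bnd q (p1 p2 : {mpoly R[q]}) a b :
  (msize p1 <= a.+1)%N -> (msize p2 <= b.+1)%N -> (msize (p1 * p2) <= (a + b).+1)%N.
Proof.
have [->|n1] := eqVneq p1 0; first by rewrite mul0r msize0.
have [->|n2] := eqVneq p2 0; first by rewrite mulr0 msize0.
move=> h1 h2; rewrite msizeM //; move: h1 h2; set x := msize p1; set y := msize p2; move=> h1 h2; case: x h1 => [|x] h1 /=; lia.
Qed.

Lemma msizeX_bnd q (p : {mpoly R[q]}) e i :
  (msize p <= e.+1)%N -> (msize (p ^+ i) <= (i * e).+1)%N.
Proof.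
move=> h; elim: i => [|i IH]; first by rewrite expr0 msize1.
by rewrite exprS mulSn; apply: msizeM_bnd.
Qed.

Lemma msizeP_bnd q k (F : 'I_k -> {mpoly R[q]}) (a : 'I_k -> nat) :
  (forall i, msize (F i) <= (a i).+1)%N ->
  (msize (\prod_i F i) <= (\sum_i a i).+1)%N.
Proof.
move=> h; elim/big_ind2: _ => //; first by rewrite msize1.
by move=> x1 x2 y1 y2 h1 h2; apply: msizeM_bnd.
Qed.

Lemma expn_mono m n e : (m <= n)%N -> (m ^ e <= n ^ e)%N.
Proof. by move=> h; elim: e => // e IH; rewrite !expnS leq_mul. Qed.

Lemma arith_bound k q e D : (q <= k)%N -> D = ((k.+1 * e.+1) ^ k)%N ->
  ((k.+1 * D * e).+1 ^ q < D.+1 ^ k.+1)%N.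
Proof.
move=> hq HD.
set c := (k.+1 * e.+1)%N.
have c1 : (0 < c)%N by rewrite muln_gt0.
have D1 : (0 < D)%N by rewrite HD expn_gt0 c1.
have hS : ((k.+1 * D * e).+1 <= c * D)%N.
  rewrite /c; nia.
apply: (@leq_ltn_trans ((k.+1 * D * e).+1 ^ k)); first exact: leq_pexp2l.
apply: (@leq_ltn_trans ((c * D) ^ k)); first exact: expn_mono.
rewrite expnMn -HD.
apply: (@leq_ltn_trans (D ^ k.+1)); first by rewrite expnS mulnC.
by rewrite ltn_exp2r.
Qed.

Lemma core k q (hq : (q <= k)%N) (P : 'I_k -> {mpoly R[q]}) (P0 Q : {mpoly R[q]}) :
  exists D : nat, exists g : {ffun 'I_k -> 'I_D.+1} * 'I_D.+1 -> R,
   (exists x, g x != 0) /\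
   forall v : 'I_q -> R, Q.@[v] != 0 ->
     \sum_x g x * ((\prod_i ((P i).@[v] / Q.@[v]) ^+ x.1 i) * (P0.@[v] / Q.@[v]) ^+ x.2) = 0.
Proof.
pose e := (\sum_i msize (P i) + msize P0 + msize Q)%N.
have hP i : (msize (P i) <= e.+1)%N.
  rewrite /e (bigD1 i) //=; lia.
have hP0 : (msize P0 <= e.+1)%N by rewrite /e; lia.
have hQ : (msize Q <= e.+1)%N by rewrite /e; lia.
pose D := ((k.+1 * e.+1) ^ k)%N.
pose N := (k.+1 * D)%N.
pose E : finType := ({ffun 'I_k -> 'I_D.+1} * 'I_D.+1)%type.
pose sig (x : E) := (\sum_i (x.1 i : nat) + x.2)%N.
have sigN x : (sig x <= N)%N.
  have h1 : (\sum_i (x.1 i : nat) <= \sum_(i < k) D)%N.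
    by apply: leq_sum => i _; rewrite -ltnS.
  rewrite sum_nat_const card_ord in h1.
  have h2 : (x.2 <= D)%N by rewrite -ltnS.
  rewrite /sig /N; lia.
pose M (x : E) := Q ^+ (N - sig x) * (\prod_i P i ^+ x.1 i) * P0 ^+ x.2.
pose S := (N * e).+1.
have hM x : (msize (M x) <= S)%N.
  have h1 := msizeX_bnd (N - sig x) hQ.
  have h2 : (msize (\prod_i P i ^+ x.1 i) <= (\sum_i (x.1 i * e)).+1)%N.
    by apply: msizeP_bnd => i; apply: msizeX_bnd.
  have h3 := msizeX_bnd x.2 hP0.
  have := msizeM_bnd (msizeM_bnd h1 h2) h3.
  rewrite -big_distrl /= /S => h; apply: (leq_trans h).
  have := sigN x; rewrite /sig; set t := (\sum_i _)%N; move=> hs.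
  rewrite ltnS -!mulnDl leq_mul2r; apply/orP; right; by rewrite -addnA subnK.
pose F : finType := {ffun 'I_q -> 'I_S}.
pose mono (f : F) : 'X_{1..q} := [multinom (f i : nat) | i < q].
pose L := \matrix_(i < #|E|, j < #|F|) (M (enum_val i))@_(mono (enum_val j)).
have Lij i j : L i j = (M (enum_val i))@_(mono (enum_val j)) by rewrite mxE.
have cardlt : (#|F| < #|E|)%N.
  rewrite /F /E card_prod !card_ffun !card_ord -expnSr.
  exact: (arith_bound (e := e) hq).
have rk : (0 < \rank (kermx L))%N.
  rewrite mxrank_ker; have := rank_leq_col L; lia.
have [i0 [j0 nz]] : exists i0 j0, kermx L i0 j0 != 0.
  case: (boolp.pselect (exists i0 j0, kermx L i0 j0 != 0)) => [h|H]; first exact: h.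
  exfalso.
  have K0 : kermx L = 0.
    apply/matrixP => i j; rewrite [RHS]mxE; apply/eqP/negPn/negP => h.
    by apply: H; exists i, j.
  by move: rk; rewrite K0 mxrank0.
pose g (x : E) := kermx L i0 (enum_rank x).
exists D, g; split.
  by exists (enum_val j0); rewrite /g enum_valK.
have key f : \sum_x g x * (M x)@_(mono f) = 0.
  transitivity ((kermx L *m L) i0 (enum_rank f)); last by rewrite mulmx_ker mxE.
  rewrite mxE.
  rewrite [RHS](reindex (@enum_rank E)) /=; last exact: onW_bij (@enum_rank_bij E).
  apply: eq_bigr => x _; rewrite /g Lij !enum_rankK //.
have Z : \sum_x g x *: M x = 0.
  apply/mpolyP => m; rewrite mcoeff0 raddf_sum /=.
  under eq_bigr do rewrite mcoeffZ.
  case: (boolp.pselect (forall i, (m i < S)%N)) => [hm|hm].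
    pose f : F := [ffun i => Ordinal (hm i)].
    have -> : m = mono f by apply/mnmP => i; rewrite mnmE ffunE.
    exact: key.
  apply: big1 => x _.
  have -> : (M x)@_m = 0; last by rewrite mulr0.
  apply: memN_msupp_eq0; apply/negP => min; apply: hm => i.
  exact: leq_trans (mnm_le_msize i min) (hM x).
move=> v Qv.
have := congr1 (meval v) Z; rewrite meval0 raddf_sum /=.
under eq_bigr do rewrite mevalZ.
have HM x : (M x).@[v] = Q.@[v] ^+ N *
   ((\prod_i ((P i).@[v] / Q.@[v]) ^+ x.1 i) * (P0.@[v] / Q.@[v]) ^+ x.2).
  rewrite /M !rmorphM /= !rmorphXn /= rmorph_prod /=.
  under eq_bigr do rewrite rmorphXn.
  set qv := Q.@[v].
  have eN : (N = (N - sig x) + (\sum_i (x.1 i : nat) + x.2))%N.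
    by have := sigN x; rewrite /sig; lia.
  rewrite [in qv ^+ N]eN !exprD.
  under [X in _ = _ * (X * _)]eq_bigr do rewrite exprMn.
  rewrite big_split prodrXr /= exprMn !exprVn.
  set A := qv ^+ (N - sig x).
  set B := \prod_i _.
  set C := P0.@[v] ^+ x.2.
  have U0 : qv ^+ (\sum_i (x.1 i : nat)) != 0 by rewrite expf_neq0.
  have V0 : qv ^+ x.2 != 0 by rewrite expf_neq0.
  move: U0 V0; set U := qv ^+ _; set V := qv ^+ x.2 => U0 V0.
  change (A * B * C = A * (U * V) * (B / U * (C / V))).
  by rewrite -[RHS]mulrA mulrACA [U * _]mulrC [V * _]mulrC !divfK // mulrA.
under eq_bigr do rewrite HM mulrCA.
rewrite -mulr_sumr => /eqP; rewrite mulf_eq0 expf_eq0 (negbTE Qv) andbF /=.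
by move/eqP.
Qed.

Lemma lcpoly k D (g : {ffun 'I_k -> 'I_D.+1} * 'I_D.+1 -> R) : (exists x, g x != 0) ->
  exists Lp : {mpoly R[k]}, Lp != 0 /\
   forall y : 'I_k -> R, Lp.@[y] != 0 ->
    exists s : seq R, forall t,
      \sum_x g x * ((\prod_i (y i) ^+ x.1 i) * t ^+ x.2) = 0 -> t \in s.
Proof.
move=> [x0 gx0].
pose mono (a : {ffun 'I_k -> 'I_D.+1}) : 'X_{1..k} := [multinom (a i : nat) | i < k].
have monoI : injective mono.
  move=> a b /mnmP h; apply/ffunP => i; apply/val_inj.
  by have := h i; rewrite !mnmE.
pose C (j : 'I_D.+1) := \sum_a g (a, j) *: 'X_[mono a].
have Cev y j : (C j).@[y] = \sum_a g (a, j) * \prod_i y i ^+ a i.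
  rewrite /C raddf_sum /=; apply: eq_bigr => a _.
  by rewrite mevalZ mevalX; congr (_ * _); apply: eq_bigr => i _; rewrite mnmE.
exists (C x0.2); split.
  apply/eqP => /(congr1 (mcoeff (mono x0.1))); rewrite mcoeff0 /C raddf_sum /=.
  rewrite (bigD1 x0.1) //= big1 ?addr0.
    by rewrite mcoeffZ mcoeffX eqxx mulr1 -surjective_pairing => /eqP; rewrite (negbTE gx0).
  move=> a ha; rewrite mcoeffZ mcoeffX.
  case: eqP => [/monoI E|]; last by rewrite mulr0.
  by move: ha; rewrite E eqxx.
move=> y Cy.
pose pp := \poly_(j < D.+1) (C (inord j)).@[y].
have pp0 : pp != 0.
  apply/eqP => /(congr1 (fun z : {poly R} => z`_x0.2)); rewrite coef0 coef_poly ltn_ord.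
  by rewrite inord_val => /eqP; rewrite (negbTE Cy).
have [s Hs] := poly_roots_fin pp0.
exists s => t ht; apply: Hs; rewrite /root; apply/eqP; rewrite -ht.
rewrite horner_poly.
under eq_bigr do rewrite inord_val Cev mulr_suml.
rewrite exchange_big pair_big /=; apply: eq_bigr => [[a j]] _ /=.
by rewrite mulrA.
Qed.

Lemma fin_cols n (Ls : 'I_n -> seq R) :
  exists s : seq 'cV[R]_n, forall x : 'cV[R]_n, (forall j, x j 0 \in Ls j) -> x \in s.
Proof.
pose K := (\sum_j size (Ls j))%N.
exists (map (fun f : {ffun 'I_n -> 'I_K.+1} => \col_j nth 0 (Ls j) (f j))
   (enum {: {ffun 'I_n -> 'I_K.+1}})).
move=> x hx.
have hi j : (index (x j 0%R) (Ls j) < K.+1)%N.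
  rewrite ltnS; apply: (@leq_trans (size (Ls j))); first by rewrite ltnW // index_mem.
  by rewrite /K (bigD1 j) //= leq_addr.
apply/mapP; exists [ffun j => inord (index (x j 0) (Ls j))]; first by rewrite mem_enum.
apply/matrixP => j o; rewrite !ord1 mxE ffunE inordK ?nth_index //.
Qed.

End Core.

Unset Implicit Arguments.

Theorem mainTheorem19 (R : realType) (n r s d : nat)
  (A B : 'M[nat]_(n, r)) (N : 'M[int]_(s, r)) (W : 'M[R]_(d, n)) :
  s = \rank (stoich R A B) ->
  d = (n - s)%N ->
  \rank (map_mx (fun z : int => z%:~R) N : 'M[R]_(s, r)) = s ->
  ((map_mx (fun z : int => z%:~R) N : 'M[R]_(s, r)) == stoich R A B)%MS ->
  row_free W ->
  (W == kermx (stoich R A B))%MS ->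
  (forall (kappa : 'cV[R]_r) (c : 'cV[R]_d), positive_vec kappa ->
     (exists x, Pkc B N W kappa c x) -> ~ finite_pred (Pkc B N W kappa c)) ->
  exists ps : seq {mpoly R[r + d]},
    (exists (kappa : 'cV[R]_r) (c : 'cV[R]_d), zariski_open_at ps kappa c) /\
    (forall (kappa : 'cV[R]_r) (c : 'cV[R]_d), zariski_open_at ps kappa c ->
       forall x, ~ Pkc B N W kappa c x).
Proof.
move=> hs hd hN _ _ _ hyp.
set Nr := (map_mx (fun z : int => z%:~R) N : 'M[R]_(s, r)).
have s_n : (s <= n)%N by rewrite hs rank_leq_row.
have s_r : (s <= r)%N by rewrite -hN rank_leq_col.
pose Kk := kermx Nr^T.
pose q0 := \rank Kk.
have hq0 : q0 = (r - s)%N by rewrite /q0 mxrank_ker mxrank_tr hN.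
pose K := row_base Kk.
pose bt := (\sum_(j < n) \sum_(i < r) B j i)%N.
have hbt j i : (B j i <= bt)%N.
  by rewrite /bt (bigD1 j) //= (bigD1 i) //= -addnA leq_addr.
pose Xu (l : 'I_q0) : {mpoly R[q0 + n]} := 'X_(lshift n l).
pose Xx (j : 'I_n) : {mpoly R[q0 + n]} := 'X_(rshift q0 j).
pose Q := \prod_j Xx j ^+ bt.
pose Pk (i : 'I_r) := (\sum_l K l i *: Xu l) * \prod_j Xx j ^+ (bt - B j i).
pose Pc (l : 'I_d) := Q * \sum_j W l j *: Xx j.
pose P (t : 'I_(r + d)) := match split t with inl i => Pk i | inr l => Pc l end.
pose P0 (j0 : 'I_n) := Q * Xx j0.
have hqk : (q0 + n <= r + d)%N by rewrite hq0 hd; lia.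
pose Good (j0 : 'I_n) (Lp : {mpoly R[r + d]}) := Lp != 0 /\
  forall kappa c, positive_vec kappa -> Lp.@[kc_point kappa c] != 0 ->
  exists sl : seq R, forall z, Pkc B N W kappa c z -> z j0 0 \in sl.
have hGood j0 : exists Lp, Good j0 Lp.
  have [D [g [gnz Hg]]] := core hqk P (P0 j0) Q.
  have [Lp [Lp0 HL]] := lcpoly gnz.
  exists Lp; split => // kappa c kpos HLy.
  have [sl Hsl] := HL _ HLy.
  exists sl => z [zpos [zss zW]].
  apply: Hsl.
  set h := hadamard kappa (monvec B z).
  have hK : (h^T <= K)%MS.
    rewrite /K eq_row_base; apply/sub_kermxP.
    by rewrite -trmx_mul zss trmx0.
  pose u := h^T *m pinvmx K.
  have hu : u *m K = h^T by rewrite /u mulmxKpV.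
  pose v := fun i : 'I_(q0 + n) => row_mx u z^T 0 i.
  have vu l : (Xu l).@[v] = u 0 l by rewrite mevalXU /v row_mxEl.
  have vx j : (Xx j).@[v] = z j 0 by rewrite mevalXU /v row_mxEr mxE.
  have zn0 j : z j 0 != 0 by rewrite gt_eqF ?zpos.
  have Qv : Q.@[v] = \prod_j z j 0 ^+ bt.
    by rewrite rmorph_prod; apply: eq_bigr => j _; rewrite rmorphXn /= vx.
  have Qv0 : Q.@[v] != 0 by rewrite Qv prodf_seq_neq0; apply/allP => j _; rewrite expf_neq0.
  have E2 : (P0 j0).@[v] / Q.@[v] = z j0 0 by rewrite mevalM mulrC vx mulKf.
  have E1 t : (P t).@[v] / Q.@[v] = kc_point kappa c t.
    rewrite -[t]splitK; case: (split t) => [i|l]; rewrite /P unsplitK /kc_point /=.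
      rewrite col_mxEu /Pk mevalM raddf_sum /=.
      have -> : \sum_l (K l i *: Xu l).@[v] = h i 0.
        have e1 : (u *m K) 0 i = h^T 0 i by rewrite hu.
        move: e1; rewrite !mxE => <-.
        by apply: eq_bigr => l _; rewrite mevalZ vu mulrC.
      rewrite /h /hadamard /monvec !mxE rmorph_prod /=.
      rewrite [X in _ * X / _](eq_bigr (fun j => z j 0 ^+ (bt - B j i))); last first.
        by move=> j _; rewrite rmorphXn /= vx.
      rewrite Qv.
      have -> : \prod_j z j 0 ^+ bt =
          (\prod_j z j 0 ^+ (bt - B j i)) * \prod_(j < n) z j 0 ^+ B j i.
        by rewrite -big_split; apply: eq_bigr => j _; rewrite /= -exprD subnK.
      have Z1 : \prod_j z j 0 ^+ (bt - B j i) != 0.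
        by rewrite prodf_seq_neq0; apply/allP => j _; rewrite expf_neq0.
      have Z2 : \prod_(j < n) z j 0 ^+ B j i != 0.
        by rewrite prodf_seq_neq0; apply/allP => j _; rewrite expf_neq0.
      move: Z1 Z2; set a1 := \prod_j _; set a2 := \prod_j _ => Z1 Z2.
      by rewrite -[kappa i 0 * a2 * a1]mulrA [a2 * a1]mulrC mulfK // mulf_neq0.
    rewrite col_mxEd /Pc mevalM mulrC mulKf //.
    rewrite -zW mxE raddf_sum /=; apply: eq_bigr => j _.
    by rewrite mevalZ vx.
  have key := Hg v Qv0.
  rewrite -[X in _ = X]key; apply: eq_bigr => x _; rewrite E2; congr (_ * (_ * _)).
  by apply: eq_bigr => i _; rewrite E1.
have [Lf HLf] := boolp.choice hGood.
pose L := \prod_j0 Lf j0.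
have Lfn0 j0 : Lf j0 != 0 by case: (HLf j0).
exists [:: L]; split.
  have L0 : L != 0 by rewrite /L prodf_seq_neq0; apply/allP => j _; exact: Lfn0.
  have [v [vpos Lv]] := mpoly_nv L0.
  exists (\col_i v (lshift d i)), (\col_l v (rshift r l)); split.
    by move=> i; rewrite mxE.
  rewrite /= orbF; rewrite (meval_eq _ (v2 := v)) // => t.
  rewrite /kc_point -[t]splitK; case: (split t) => [i|l] /=.
    by rewrite col_mxEu mxE.
  by rewrite col_mxEd mxE.
move=> kappa c [kpos]; rewrite /= orbF => HLy x Px.
apply: (hyp kappa c kpos); first by exists x.
have HL j0 : (Lf j0).@[kc_point kappa c] != 0.
  move: HLy; rewrite /L rmorph_prod /= prodf_seq_neq0 => /allP; apply.
  by rewrite mem_index_enum.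
have hsl j0 : exists sl : seq R, forall z, Pkc B N W kappa c z -> z j0 0 \in sl.
  exact: (HLf j0).2 kpos (HL j0).
have [Ls HLs] := boolp.choice hsl.
have [sv Hsv] := fin_cols Ls.
by exists sv => z Pz; apply: Hsv => j; apply: HLs.
Qed.
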